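(* Let $0\le t_d\le t_f$ be integers, let $\mathcal{C}$ be an $[n,k,\ge 2t_d+1]$ linear code over $\mathbb{F}_q$ with generator matrix $G$ and $c_u=uG$, let $f:\mathbb{F}_q^k\to\mathrm{Im}(f)$, and let $u_1,\dots,u_M\in\mathbb{F}_q^k$. Then $$N\big(\mathcal{D}_{\mathcal{C},f}(t_f:u_1,\dots,u_M)\big)\le N(M,2(t_f-t_d)).$$
   Context: $d(\cdot,\cdot)$ is Hamming distance. $\mathcal{D}_{\mathcal{C},f}(t_f:u_1,\dots,u_M)$ is the $M\times M$ matrix with $(i,j)$ entry $\max(2t_f+1-d(c_{u_i},c_{u_j}),0)$ if $f(u_i)\ne f(u_j)$ and $0$ otherwise. For a nonnegative integer $M\times M$ matrix $\mathcal{D}$, $N(\mathcal{D})$ is the least $r$ such that there are $p_1,\dots,p_M\in\mathbb{F}_q^r$ (not necessarily distinct) with $d(p_i,p_j)\ge[\mathcal{D}]_{i,j}$ for all $i,j$. $N(M,D)$ denotes $N(\mathcal{D})$ for the matrix with all off-diagonal entries equal to $D$ and zero diagonal. *)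

(* Defs.v *)
From HB Require Import structures.
From mathcomp Require Import all_boot all_order all_algebra.
From Stdlib Require Import ClassicalEpsilon.
Set Implicit Arguments. Unset Strict Implicit. Unset Printing Implicit Defensive.
Import GRing.Theory.

Definition hdist (F : finFieldType) (n : nat) (x y : 'rV[F]_n) : nat :=
  #|[set i : 'I_n | x ord0 i != y ord0 i]|.

Definition feasible (F : finFieldType) (M : nat) (D : 'M[nat]_M) (r : nat) : bool :=
  [exists p : {ffun 'I_M -> 'rV[F]_r},
     [forall i : 'I_M, [forall j : 'I_M, D i j <= hdist (p i) (p j)]]].

(* N(D) : least feasible r (0 by convention if none exists, which never
   happens over a field) *)
Definition Nmin (F : finFieldType) (M : nat) (D : 'M[nat]_M) : nat :=
  match excluded_middle_informative (exists r, feasible F D r) with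
  | left h => ex_minn h
  | right _ => 0
  end.

Definition constD (M D : nat) : 'M[nat]_M :=
  \matrix_(i, j) (if i == j then 0 else D).

(* D_{C,f}(t_f : u_1..u_M), c_u = u G; nat subtraction is max(.,0) *)
Definition DCf (F : finFieldType) (k n : nat) (Y : eqType) (G : 'M[F]_(k, n))
  (f : 'rV[F]_k -> Y) (tf M : nat) (u : 'I_M -> 'rV[F]_k) : 'M[nat]_M :=
  \matrix_(i, j) (if f (u i) != f (u j)
                  then (2 * tf + 1 - hdist (u i *m G) (u j *m G))%N
                  else 0%N).

(* Main.v *)
Require Import Defs.
From mathcomp Require Import all_boot all_order all_algebra.
Import GRing.Theory.
From Stdlib Require Import ClassicalEpsilon.
From mathcomp Require Import zify.

Lemma Nmin_le (F : finFieldType) M (D : 'M[nat]_M) r :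
  feasible F D r -> (Nmin F D <= r)%N.
Proof.
move=> H; rewrite /Nmin; case: excluded_middle_informative => [h|[]]; last by exists r.
by case: ex_minnP => m _; apply.
Qed.

Lemma Nmin_feas (F : finFieldType) M (D : 'M[nat]_M) :
  (exists r, feasible F D r) -> feasible F D (Nmin F D).
Proof.
move=> E; rewrite /Nmin; case: excluded_middle_informative => [h|//].
by case: ex_minnP.
Qed.

Lemma constD_feas (F : finFieldType) M D : exists r, feasible F (constD M D) r.
Proof.
exists (D * M)%N; apply/existsP.
exists [ffun i : 'I_M => (\row_(j < D * M) (if (j %/ D == i)%N then (1:F) else 0))%R].
apply/forallP => i; apply/forallP => j; rewrite mxE.
case: eqP => [//|/eqP ne].
have lt : forall x : 'I_D, (i * D + x < D * M)%N.
  move=> x; have := ltn_ord i; have := ltn_ord x => h1 h2.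
  apply: (@leq_trans ((i.+1) * D)); first by rewrite mulSn addnC ltn_add2r.
  by rewrite mulnC leq_pmul2l ?(leq_ltn_trans _ h1).
pose g (x : 'I_D) : 'I_(D * M) := Ordinal (lt x).
have ginj : injective g.
  by move=> x y /(congr1 val) /= /addnI /val_inj.
rewrite /hdist -{1}(card_ord D) -(card_imset (mem 'I_D) ginj); apply: subset_leq_card.
apply/subsetP => _ /imsetP [x _ ->]; rewrite inE !ffunE !mxE /=.
have hx : ((i * D + x) %/ D = i)%N.
  have Dp : (0 < D)%N by apply: leq_ltn_trans (ltn_ord x).
  rewrite divnMDl // divn_small ?addn0 //.
rewrite hx eqxx; case: eqP => [e|_]; last by [].
move: e; case: ifP => [/eqP hij|_] //.
  by case/eqP: ne; apply: val_inj.
move/eqP; by rewrite oner_eq0.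
Qed.

Lemma hdist_sub (F : finFieldType) n (x y : 'rV[F]_n) :
  hdist x y = hdist (x - y) 0.
Proof.
rewrite /hdist; apply: eq_card => i; by rewrite !inE !mxE subr_eq0.
Qed.

Theorem mainTheorem5 (F : finFieldType) (n k M td tf : nat)
  (G : 'M[F]_(k, n)) (Y : eqType) (f : 'rV[F]_k -> Y) (u : 'I_M -> 'rV[F]_k) :
  (td <= tf)%N ->
  row_free G ->
  (forall v : 'rV[F]_k, v != 0%R -> (2 * td + 1 <= hdist (v *m G) 0%R)%N) ->
  (Nmin F (DCf G f tf u) <= Nmin F (constD M (2 * (tf - td))))%N.
Proof.
move=> htd _ hC; apply: Nmin_le.
have /existsP [p /forallP hp] := @Nmin_feas F M _ (constD_feas F M (2 * (tf - td))).
apply/existsP; exists p; apply/forallP => i; apply/forallP => j.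
have := forallP (hp i) j; rewrite !mxE.
move=> hpij; case: ifP => [hf|_]; last by [].
have nij : i != j by apply/eqP => e; rewrite e eqxx in hf.
rewrite (negbTE nij) in hpij; apply: leq_trans hpij.
have nu : (u i - u j != 0)%R.
  by rewrite subr_eq0; apply/eqP => e; rewrite e eqxx in hf.
have := hC _ nu; rewrite mulmxBl -hdist_sub => hd.
apply: leq_trans (leq_sub2l _ hd) _.
by rewrite subnDr mulnBr.
Qed.
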